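(* Let $n$ be an even positive integer and $m$ a positive divisor of $n$. Let $G:\mathbb{F}_{2^n}\to\mathbb{F}_{2^m}$ be a vectorial bent function and $g:\mathbb{F}_{2^n}\to\mathbb{F}_2\subseteq\mathbb{F}_{2^m}$ a Boolean function. Then $H(x)=G(x)+g(x)$ is a vectorial bent (respectively, vectorial plateaued) $(n,m)$-function if and only if for every $\lambda\in\mathbb{F}_{2^m}^*$ with $\mathrm{Tr}^m_1(\lambda)=1$, the Boolean function $G_\lambda(x)+g(x)$ is bent (respectively, plateaued).
   Context: $\mathrm{Tr}^m_1(x)=\sum_{i=0}^{m-1}x^{2^i}$. For an $(n,m)$-function $F:\mathbb{F}_{2^n}\to\mathbb{F}_{2^m}$ and $\lambda\in\mathbb{F}_{2^m}^*$, the component $F_\lambda(x)=\mathrm{Tr}^m_1(\lambda F(x))$. For a Boolean function $f$ on $\mathbb{F}_{2^n}$, $W_f(a)=\sum_x(-1)^{f(x)+\mathrm{Tr}^n_1(ax)}$; $f$ is bent if $|W_f(a)|=2^{n/2}$ for all $a$, and plateaued if $W_f$ takes values in $\{0,\pm2^s\}$ for some integer $n/2\le s\le n$. $F$ is vectorial bent (resp. vectorial plateaued) if all its components $F_\lambda$, $\lambda\neq0$, are bent (resp. plateaued). *)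

(* Defs.v *)
From mathcomp Require Import all_boot all_algebra all_field.
Set Implicit Arguments. Unset Strict Implicit. Unset Printing Implicit Defensive.
Import GRing.Theory Num.Theory.
Local Open Scope ring_scope.

Definition trace (F : ringType) (k : nat) (x : F) : F := \sum_(i < k) x ^+ (2 ^ i).

(* Boolean functions on K are modelled as K -> bool (F_2 = {false,true}).
   The value Tr(a x) lies in the prime field {0,1}; we read it as the bit (Tr(ax) != 0). *)
Definition walsh (K : finFieldType) (n : nat) (f : K -> bool) (a : K) : int :=
  \sum_(x : K) (-1) ^+ (f x) * (-1) ^+ (trace n (a * x) != 0).

Definition bent (K : finFieldType) (n : nat) (f : K -> bool) : Prop :=
  forall a : K, `|walsh n f a| = 2 ^+ (n./2).

Definition plateaued (K : finFieldType) (n : nat) (f : K -> bool) : Prop :=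
  exists s : nat, (n./2 <= s <= n)%N /\
    forall a : K, walsh n f a \in [:: 0; 2 ^+ s; - 2 ^+ s].

Definition component (K L : finFieldType) (m : nat) (F : K -> L) (l : L) : K -> bool :=
  fun x => trace m (l * F x) != 0.

Definition vbent (K L : finFieldType) (n m : nat) (F : K -> L) : Prop :=
  forall l : L, l != 0 -> bent n (component m F l).

Definition vplateaued (K L : finFieldType) (n m : nat) (F : K -> L) : Prop :=
  forall l : L, l != 0 -> plateaued n (component m F l).

(* Main.v *)
Require Import Defs.
From mathcomp Require Import all_boot all_algebra all_field.
Import GRing.Theory Num.Theory.
Local Open Scope ring_scope.

Section Tr.
Variables (L : finFieldType) (m : nat).
Hypothesis hm : (0 < m)%N.
Hypothesis cardL : #|L| = (2 ^ m)%N.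

Lemma char2 : (2 \in [pchar L])%N.
Proof. exact: (card_finPcharP cardL). Qed.

Lemma pnat2X i : [pchar L].-nat (2 ^ i)%N.
Proof. by rewrite pnatX pnatE // char2. Qed.

Lemma trD (a b : L) : trace m (a + b) = trace m a + trace m b.
Proof.
rewrite /trace -big_split /=; apply: eq_bigr => i _.
exact: exprDn_pchar (pnat2X i).
Qed.

Lemma tr0 : trace m (0 : L) = 0.
Proof. by rewrite /trace big1 // => i _; rewrite expr0n expn_eq0. Qed.

Lemma tr_sq (a : L) : trace m a ^+ 2 = trace m a.
Proof.
have -> : trace m a ^+ 2 = \sum_(i < m) (a ^+ (2 ^ i)) ^+ 2.
  rewrite /trace; apply: (big_morph (fun x : L => x ^+ 2)).
    by move=> x y; exact: exprDn_pchar (pnat2X 1).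
  by rewrite expr0n.
case: m hm cardL => // k _ cL.
rewrite /trace big_ord_recr big_ord_recl /= -exprM -expnSr -cL expf_card addrC.
congr (_ + _); apply: eq_bigr => i _; rewrite -exprM -expnSr //.
Qed.

Lemma tr01 (a : L) : trace m a = 0 \/ trace m a = 1.
Proof.
have := tr_sq a; set t := trace m a => h.
have : t * (t - 1) == 0 by rewrite mulrBr mulr1 -expr2 h subrr.
rewrite mulf_eq0 subr_eq0 => /orP[/eqP|/eqP]; tauto.
Qed.

Lemma one_one : (1 : L) + 1 = 0.
Proof. by rewrite -mulr2n (pcharf0 char2). Qed.

Lemma bitD (a b : L) : (a = 0 \/ a = 1) -> (b = 0 \/ b = 1) ->
  (a + b != 0) = (a != 0) (+) (b != 0).
Proof.
move=> [->|->] [->|->]; rewrite ?addr0 ?add0r ?one_one ?eqxx ?oner_eq0 //.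
Qed.

Lemma compH (K : finFieldType) (G : K -> L) (g : K -> bool) (l : L) (x : K) :
  component m (fun x => G x + (g x)%:R) l x =
  if trace m l == 0 then component m G l x else component m G l x (+) g x.
Proof.
rewrite /component mulrDr trD.
have -> : trace m (l * (g x)%:R) = if g x then trace m l else 0.
  by case: (g x); rewrite ?mulr1 ?mulr0 ?tr0.
case: (tr01 l) => ->; rewrite ?eqxx ?oner_eq0 /=.
  by case: (g x); rewrite addr0.
rewrite bitD; [| exact: tr01 |]; last by case: (g x); tauto.
by case: (g x); rewrite ?oner_eq0 ?eqxx.
Qed.

End Tr.

Lemma walsh_ext (K : finFieldType) n (f f' : K -> bool) :
  f =1 f' -> forall a, walsh n f a = walsh n f' a.
Proof. by move=> e a; rewrite /walsh; apply: eq_bigr => x _; rewrite e. Qed.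

Lemma bent_ext (K : finFieldType) n (f f' : K -> bool) :
  f =1 f' -> bent n f -> bent n f'.
Proof. by move=> e b a; rewrite -(@walsh_ext _ _ _ _ e). Qed.

Lemma plat_ext (K : finFieldType) n (f f' : K -> bool) :
  f =1 f' -> plateaued n f -> plateaued n f'.
Proof.
by move=> e [s [hs b]]; exists s; split=> // a; rewrite -(@walsh_ext _ _ _ _ e).
Qed.

Lemma bent_plat (K : finFieldType) n (f : K -> bool) :
  bent n f -> plateaued n f.
Proof.
move=> b; exists n./2; split.
  rewrite leqnn /= leq_half_double; apply: leqW; rewrite -addnn leq_addr //.
move=> a; have := b a; set w := walsh n f a.
have [w0|w0] := lerP 0 w.
  by rewrite ger0_norm // => ->; rewrite !inE eqxx orbT.
by rewrite ltr0_norm // => <-; rewrite opprK !inE eqxx !orbT.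
Qed.

Theorem theorem3 (K L : finFieldType) (n m : nat)
  (hn : (0 < n)%N) (hne : ~~ odd n) (hm : (0 < m)%N) (hmn : (m %| n)%N)
  (cardK : #|K| = (2 ^ n)%N) (cardL : #|L| = (2 ^ m)%N)
  (G : K -> L) (g : K -> bool) :
  vbent n m G ->
  let H := fun x => G x + (g x)%:R in
  (vbent n m H <->
     (forall l : L, l != 0 -> trace m l = 1 ->
        bent n (fun x => component m G l x (+) g x)))
  /\
  (vplateaued n m H <->
     (forall l : L, l != 0 -> trace m l = 1 ->
        plateaued n (fun x => component m G l x (+) g x))).
Proof.
move=> vG H.
have cH := @compH L m hm cardL K G g.
split; split.
- move=> vH l l0 t1; apply: (@bent_ext _ _ _ _ _ (vH l l0)) => x.
  by rewrite cH t1 oner_eq0.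
- move=> h l l0; case: (@tr01 L m hm cardL l) => t.
    by apply: (@bent_ext _ _ _ _ _ (vG l l0)) => x; rewrite cH t eqxx.
  by apply: (@bent_ext _ _ _ _ _ (h l l0 t)) => x; rewrite cH t oner_eq0.
- move=> vH l l0 t1; apply: (@plat_ext _ _ _ _ _ (vH l l0)) => x.
  by rewrite cH t1 oner_eq0.
- move=> h l l0; case: (@tr01 L m hm cardL l) => t.
    by apply: (@plat_ext _ _ _ _ _ (bent_plat _ _ _ (vG l l0))) => x; rewrite cH t eqxx.
  by apply: (@plat_ext _ _ _ _ _ (h l l0 t)) => x; rewrite cH t oner_eq0.
Qed.
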